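(* In the setting of the switching procedure below (with $\lambda=\Theta(\log n)$ and $k=\Theta(\lambda\log n)$), let $D:=\frac{2en\ln n}{k}$. Then $D=\Theta\left(\frac{n}{\log n}\right)$, and the probability that the procedure switches to the $(1+(\lambda,\lambda))$ GA before the $(1+1)$ EA has reached an individual at distance at most $D$ from the optimum is at most $1/n$.
   Context: The procedure maximizes $\mathrm{OneMax}(x)=\sum_{i=1}^n x_i$ on $\{0,1\}^n$ (optimum $1^n$; distance = number of zero-bits). It starts from a uniformly random point and runs the $(1+1)$ EA (each iteration: create one offspring by flipping each bit independently with probability $1/n$, accept it if its fitness is at least the current one) until, for the first time, $k$ consecutive $(1+1)$ EA iterations fail to create a strictly better offspring; then it switches irrevocably to the $(1+(\lambda,\lambda))$ GA with population size $\lambda$ (each iteration: sample $\ell\sim\mathrm{Bin}(n,\lambda/n)$, create $\lambda$ offspring each flipping exactly $\ell$ uniformly random distinct positions, take a best one $x'$; create $\lambda$ crossover offspring each taking per position the bit of $x'$ with probability $1/\lambda$ and of $x$ otherwise; accept a best one $y$ if $f(y)\ge f(x)$). Here $\lambda=\lambda(n)=\Theta(\log n)$ and $k=k(n)=\Theta(\lambda\log n)$. *)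

(* Defs.v *)
From HB Require Import structures.
From mathcomp Require Import all_boot all_order all_algebra.
From mathcomp Require Import all_classical all_reals all_analysis.
Set Implicit Arguments. Unset Strict Implicit. Unset Printing Implicit Defensive.
Import Order.TTheory GRing.Theory Num.Theory.
Local Open Scope ring_scope.

Section OnePlusOneEA.
Variable R : realType.
Variable n : nat.

Definition bits := {ffun 'I_n -> bool}.

Definition onemax (x : bits) : nat := #|[set i | x i]|.

Definition dist_opt (x : bits) : nat := #|[set i | ~~ x i]|.

Definition mut_prob (x y : bits) : R :=
  \prod_(i < n) (if x i != y i then n%:R^-1 else 1 - n%:R^-1).

(* early_switch D k T x c : probability that, starting the (1+1) EA phase
   from current individual x with c consecutive non-improving iterations
   already counted, the procedure switches (k consecutive iterations without
   a strictly better offspring) within at most T further (1+1) EA iterations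
   and before an individual at distance <= D from the optimum is reached. *)
Fixpoint early_switch (D : R) (k : nat) (T : nat) (x : bits) (c : nat) : R :=
  if (dist_opt x)%:R <= D then 0
  else if (k <= c)%N then 1
  else match T with
       | 0 => 0
       | T'.+1 =>
         \sum_(y : bits) mut_prob x y *
           (if (onemax x < onemax y)%N then early_switch D k T' y 0
            else if onemax x == onemax y then early_switch D k T' y c.+1
            else early_switch D k T' x c.+1)
       end.

Definition early_switch_init (D : R) (k T : nat) : R :=
  (2%:R ^+ n)^-1 * \sum_(x : bits) early_switch D k T x 0.

End OnePlusOneEA.

Definition Dthr (R : realType) (n k : nat) : R :=
  2 * expR 1 * n%:R * ln (n%:R) / k%:R.

(* Main.v *)
Require Import Defs.
From HB Require Import structures.
From mathcomp Require Import all_boot all_order all_algebra.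
From mathcomp Require Import all_classical all_reals all_analysis.
From mathcomp Require Import ring lra zify.
Import Order.TTheory GRing.Theory Num.Theory.
Local Open Scope ring_scope.

Section Mut.
Variable R : realType.
Variable n : nat.

Lemma invn_ge0 : 0 <= (n%:R : R)^-1.
Proof. by rewrite invr_ge0. Qed.

Lemma invn_le1 : (n%:R : R)^-1 <= 1.
Proof.
case: n => [|m]; first by rewrite invr0.
by rewrite invf_le1 // ?ler1n // ltr0n.
Qed.

Lemma mut_ge0 (x y : bits n) : 0 <= mut_prob R x y.
Proof.
rewrite /mut_prob; apply: prodr_ge0 => i _.
case: ifP => _; first exact: invn_ge0.
by rewrite subr_ge0 invn_le1.
Qed.

Lemma mut_sum1 (x : bits n) : \sum_(y : bits n) mut_prob R x y = 1.
Proof.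
rewrite /mut_prob.
have := (@bigA_distr_bigA R 0 1 *%R +%R 'I_n bool
   (fun i j => if x i != j then (n%:R : R)^-1 else 1 - n%:R^-1)).
move=> <-.
rewrite big1 // => i _.
rewrite big_bool /=; case: (x i) => /=; lra.
Qed.

Lemma dist_onemax (x : bits n) : (dist_opt x + onemax x = n)%N.
Proof.
rewrite /dist_opt /onemax.
have -> : [set i | ~~ x i] = ~: [set i | x i].
  by apply/setP => i; rewrite !inE.
by rewrite addnC cardsC card_ord.
Qed.

Definition flip (x : bits n) (i : 'I_n) : bits n :=
  [ffun j => if j == i then true else x j].

Lemma mut_flip (x : bits n) i : ~~ x i ->
  mut_prob R x (flip x i) = n%:R^-1 * (1 - n%:R^-1) ^+ n.-1.
Proof.
move=> xi; rewrite /mut_prob (bigD1 i) //= /flip ffunE eqxx.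
rewrite (negbTE xi) /=; congr (_ * _).
rewrite (eq_bigr (fun _ => 1 - n%:R^-1)); last first.
  by move=> j /negbTE ji; rewrite ffunE ji eqxx.
by rewrite prodr_const cardC1 card_ord.
Qed.

Lemma onemax_flip (x : bits n) i : ~~ x i -> (onemax x < onemax (flip x i))%N.
Proof.
move=> xi; rewrite /onemax; apply: proper_card; apply/properP; split.
  by apply/fintype.subsetP => j; rewrite !inE /flip ffunE; case: (j == i).
by exists i; rewrite inE /flip ?ffunE ?eqxx // (negbTE xi).
Qed.

Definition Pimp (x : bits n) : R :=
  \sum_(y : bits n) mut_prob R x y * (onemax x < onemax y)%:R.

Lemma Pimp_ge (x : bits n) :
  (dist_opt x)%:R * (n%:R^-1 * (1 - n%:R^-1) ^+ n.-1) <= Pimp x.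
Proof.
have inj : {in [set i | ~~ x i] &, injective (flip x)}.
  move=> i j; rewrite !inE => xi xj /ffunP /(_ i); rewrite /flip !ffunE eqxx.
  by case: eqP => // _ E; rewrite -E in xi.
rewrite /dist_opt -sum1_card natr_sum mulr_suml.
rewrite (eq_bigr (fun i => mut_prob R x (flip x i) * (onemax x < onemax (flip x i))%:R)); last first.
  by move=> i; rewrite inE => xi; rewrite mul1r mut_flip // onemax_flip // mulr1.
rewrite -(big_imset (fun y => mut_prob R x y * (onemax x < onemax y)%:R) inj) /=.
rewrite /Pimp [X in _ <= X](bigID (mem (flip x @: [set i | ~~ x i]))) /=.
rewrite lerDl; apply: sumr_ge0 => y _; apply: mulr_ge0; first exact: mut_ge0.
by rewrite ler0n.
Qed.

Lemma exp_bound : (expR 1)^-1 <= (1 - (n%:R : R)^-1) ^+ n.-1.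
Proof.
have e1 : (expR 1)^-1 <= (1 : R).
  rewrite invf_le1 ?expR_gt0 //; have := expR_ge1Dx (1:R); lra.
case: n => [|m] /=; first by rewrite expr0.
case: m => [|m]; first by rewrite expr0.
have hm : 0 < (m.+1%:R : R) by rewrite ltr0n.
have e2 : expR 1 = expR ((m.+1%:R : R)^-1) ^+ m.+1.
  by rewrite -expRM_natl mulfV // gt_eqF.
have ge : ((m.+2%:R : R) / m.+1%:R) ^+ m.+1 <= expR 1.
  rewrite e2; apply: lerXn2r; rewrite ?nnegrE ?divr_ge0 ?ler0n ?expR_ge0 //.
  have -> : (m.+2%:R : R) / m.+1%:R = 1 + m.+1%:R^-1.
    by rewrite -addn1 natrD mulrDl divff ?gt_eqF // mul1r addrC.
  exact: expR_ge1Dx.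
have -> : 1 - (m.+2%:R : R)^-1 = (m.+2%:R / m.+1%:R)^-1.
  rewrite invf_div; rewrite -[m.+2]addn1 natrD; field.
  have := ler0n R m; lra.
rewrite exprVn lef_pV2 ?posrE ?expR_gt0 //.
Qed.

End Mut.
Arguments Pimp {R n}.
Arguments mut_ge0 {R n}.
Arguments mut_sum1 {R n}.
Arguments dist_onemax {n}.
Arguments Pimp_ge {R n}.
Arguments exp_bound {R}.
Section Main.
Variable R : realType.
Variable n : nat.
Variables (D : R) (k : nat) (q : R).
Hypothesis hD : 0 <= D.
Hypothesis hq : 0 <= q.
Hypothesis himp : forall x : bits n, D < (dist_opt x)%:R -> 1 - q <= Pimp x.

Lemma ES_zero T (x : bits n) c : (dist_opt x)%:R <= D -> early_switch D k T x c = 0.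
Proof. by move=> h; case: T => [|T] /=; rewrite h. Qed.

Lemma ES_bound T : forall (x : bits n) c,
  early_switch D k T x c <= q ^+ (k - c) + ((dist_opt x).-1)%:R * q ^+ k.
Proof.
have Bge0 : forall (x : bits n) c, 0 <= q ^+ (k - c) + ((dist_opt x).-1)%:R * q ^+ k.
  by move=> x c; rewrite addr_ge0 ?mulr_ge0 ?exprn_ge0 ?ler0n.
elim: T => [|T IH] x c /=.
  case: ifP => _ //; case: ifP => // kc.
  by rewrite (eqP kc) expr0 lerDl mulr_ge0 ?exprn_ge0 ?ler0n.
case: ifP => // /negbT; rewrite -ltNge => hx.
case: ifP => [kc|/negbT]; first by rewrite (eqP kc) expr0 lerDl mulr_ge0 ?exprn_ge0 ?ler0n.
rewrite -ltnNge => ck.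
set A := ((dist_opt x).-1)%:R * q ^+ k.
set r := q ^+ (k - c.+1).
pose G (y : bits n) := (r + A) - r * (onemax x < onemax y)%:R.
have FG : forall y : bits n,
   (if (onemax x < onemax y)%N then early_switch D k T y 0
    else if onemax x == onemax y then early_switch D k T y c.+1
    else early_switch D k T x c.+1) <= G y.
  move=> y; rewrite /G; case: ifP => imp.
    rewrite mulr1 [r + A]addrC addrK.
    have [hy|hy] := lerP ((dist_opt y)%:R) D.
      by rewrite ES_zero // /A mulr_ge0 ?exprn_ge0 ?ler0n.
    apply: (le_trans (IH y 0%N)); rewrite subn0 /A.
    have d1 : (0 < dist_opt y)%N by rewrite -(ltr0n R); apply: le_lt_trans hy.
    have dxy : (dist_opt y < dist_opt x)%N.
      have := dist_onemax x; have := dist_onemax y; move: imp; lia.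
    rewrite -{1}(mul1r (q ^+ k)) -mulrDl ler_wpM2r ?exprn_ge0 //.
    rewrite -[1]/(1%:R) -natrD ler_nat; lia.
  rewrite mulr0 subr0; case: ifP => eq.
    have -> : A = ((dist_opt y).-1)%:R * q ^+ k.
      have := dist_onemax x; have := dist_onemax y; move: eq => /eqP; rewrite /A.
      by move=> e h1 h2; do 2 f_equal; lia.
    exact: IH.
  exact: IH.
apply: (le_trans (ler_sum _ (fun y _ => ler_wpM2l (mut_ge0 x y) (FG y)))).
have E : \sum_(y : bits n) mut_prob R x y * G y
    = (r + A) * (\sum_(y : bits n) mut_prob R x y) - r * Pimp x.
  rewrite /Pimp !mulr_sumr -sumrB; apply: eq_bigr => y _; rewrite /G; ring.
rewrite E (mut_sum1 x) mulr1.
have hP := himp x hx.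
have -> : q ^+ (k - c) = r * q by rewrite /r -exprSr subnSK.
have r0 : 0 <= r by rewrite exprn_ge0.
have : r * (1 - Pimp x) <= r * q by apply: ler_wpM2l => //; lra.
lra.
Qed.

Lemma ESinit_bound T : (0 < n)%N ->
  @early_switch_init R n D k T <= n%:R * q ^+ k.
Proof.
move=> n0; rewrite /early_switch_init.
have h : forall x : bits n, early_switch D k T x 0 <= n%:R * q ^+ k.
  move=> x; apply: (le_trans (ES_bound T x 0)); rewrite subn0.
  rewrite -{1}(mul1r (q ^+ k)) -mulrDl ler_wpM2r ?exprn_ge0 //.
  rewrite -[1]/(1%:R) -natrD ler_nat; have := dist_onemax x; lia.
apply: (le_trans (ler_wpM2l _ (ler_sum _ (fun x _ => h x)))).
  by rewrite invr_ge0 exprn_ge0 // ler0n.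
rewrite sumr_const card_ffun card_bool card_ord -[_ *+ (2 ^ n)%N]mulr_natr natrX mulrC -mulrA mulfV ?mulr1 //.
Qed.

End Main.
Lemma eqle (R : realType) (x y : R) : x = y -> x <= y.
Proof. by move=> ->. Qed.

Lemma div_bounds (R : realType) (X L K a b : R) :
  0 <= X -> 0 < L -> 0 < a -> 0 < b -> a * L ^+ 2 <= K -> K <= b * L ^+ 2 ->
  X / b / L <= X * L / K /\ X * L / K <= X / a / L.
Proof.
move=> X0 L0 a0 b0 h1 h2.
have K0 : 0 < K by apply: lt_le_trans h1; rewrite mulr_gt0 // exprn_gt0.
split.
  rewrite ler_pdivlMr //.
  have Y0 : 0 <= X / b / L by rewrite !divr_ge0 // ltW.
  apply: (le_trans (ler_wpM2l Y0 h2)); apply: eqle; field.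
  by rewrite !gt_eqF.
rewrite ler_pdivrMr //.
have Y0 : 0 <= X / a / L by rewrite !divr_ge0 // ltW.
apply: (le_trans _ (ler_wpM2l Y0 h1)); apply: eqle; field.
by rewrite !gt_eqF.
Qed.

Lemma ln_large (R : realType) (M : R) : exists N : nat, forall n : nat,
  (N <= n)%N -> M <= ln (n%:R : R).
Proof.
exists (Num.Def.trunc (expR M)).+1 => m hm.
have h : expR M < m%:R.
  apply: (lt_le_trans (truncnS_gt _)); by rewrite ler_nat.
rewrite -{1}(expRK M) ler_ln ?posrE ?expR_gt0 ?(lt_trans (expR_gt0 M) h) //.
exact: ltW.
Qed.

Arguments div_bounds {R X L K a b}.
Arguments ln_large {R}.

Theorem lemma5p2 (R : realType) (lam k : nat -> nat)
  (Hlam : exists (c1 c2 : R) (n0 : nat), 0 < c1 /\ 0 < c2 /\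
     forall n : nat, (n0 <= n)%N ->
       c1 * ln n%:R <= (lam n)%:R /\ (lam n)%:R <= c2 * ln n%:R)
  (Hk : exists (c1 c2 : R) (n0 : nat), 0 < c1 /\ 0 < c2 /\
     forall n : nat, (n0 <= n)%N ->
       c1 * (lam n)%:R * ln n%:R <= (k n)%:R /\
       (k n)%:R <= c2 * (lam n)%:R * ln n%:R) :
  (exists (c1 c2 : R) (n0 : nat), 0 < c1 /\ 0 < c2 /\
     forall n : nat, (n0 <= n)%N ->
       c1 * (n%:R / ln n%:R) <= Dthr R n (k n) /\
       Dthr R n (k n) <= c2 * (n%:R / ln n%:R))
  /\
  (exists n0 : nat, forall n : nat, (n0 <= n)%N ->
     forall T : nat, @early_switch_init R n (Dthr R n (k n)) (k n) T <= n%:R^-1).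
Proof.
case: Hlam => [l1 [l2 [nl [l10 [l20 Hl]]]]].
case: Hk => [k1 [k2 [nk [k10 [k20 Hk]]]]].
set a := k1 * l1; set b := k2 * l2.
have a0 : 0 < a by rewrite mulr_gt0.
have b0 : 0 < b by rewrite mulr_gt0.
have base : forall n : nat, (maxn 2 (maxn nl nk) <= n)%N ->
  [/\ 0 < ln (n%:R : R), a * ln (n%:R : R) ^+ 2 <= (k n)%:R &
      (k n)%:R <= b * ln (n%:R : R) ^+ 2].
  move=> n; rewrite !geq_max => /and3P [n2 hnl hnk].
  have L0 : 0 < ln (n%:R : R) by apply: ln_gt0; rewrite ltr1n.
  have [h1 h2] := Hl n hnl; have [h3 h4] := Hk n hnk.
  split => //.
    apply: le_trans h3; rewrite /a expr2 !mulrA ler_pM2r // -mulrA.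
    by rewrite ler_pM2l.
  apply: (le_trans h4); rewrite /b expr2 !mulrA ler_pM2r // -mulrA.
  by rewrite ler_pM2l.
have Dform : forall n : nat, Dthr R n (k n) = (2 * expR 1 * n%:R) * ln (n%:R : R) / (k n)%:R.
  by [].
split.
  exists (2 * expR 1 / b), (2 * expR 1 / a), (maxn 2 (maxn nl nk)).
  split; first by rewrite !mulr_gt0 ?expR_gt0 ?invr_gt0.
  split; first by rewrite !mulr_gt0 ?expR_gt0 ?invr_gt0.
  move=> n hn; have [L0 h1 h2] := base n hn.
  have X0 : 0 <= 2 * expR 1 * (n%:R : R) by rewrite !mulr_ge0 ?ler0n ?expR_ge0.
  have [d1 d2] := div_bounds X0 L0 a0 b0 h1 h2.
  rewrite Dform; split.
    apply: le_trans d1; apply: eqle; field; by rewrite !gt_eqF.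
  apply: le_trans d2 _; apply: eqle; field; by rewrite !gt_eqF.
have [N2 HN2] := ln_large (2 / a).
exists (maxn N2 (maxn 2 (maxn nl nk))) => n; rewrite geq_max => /andP [hN2 hn] T.
have [L0 h1 h2] := base n hn.
set L := ln (n%:R : R) in L0 h1 h2.
have LL : 2 / a <= L by exact: HN2.
have n1 : (1 < n)%N by move: hn; rewrite !geq_max => /andP [] //.
have nR : 0 < (n%:R : R) by rewrite ltr0n; lia.
have K0 : 0 < ((k n)%:R : R) by apply: lt_le_trans h1; rewrite mulr_gt0 // exprn_gt0.
have p1 : 2 * L <= (k n)%:R.
  apply: le_trans h1; rewrite expr2 mulrA ler_pM2r //.
  by rewrite -ler_pdivrMl // mulrC.
set q := 1 - 2 * L / (k n)%:R.
have q0 : 0 <= q by rewrite /q subr_ge0 ler_pdivrMr // mul1r.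
have D0 : 0 <= Dthr R n (k n).
  by rewrite Dform divr_ge0 ?ler0n // !mulr_ge0 ?ler0n ?expR_ge0 ?ltW.
have himp : forall x : bits n, Dthr R n (k n) < (dist_opt x)%:R -> 1 - q <= Pimp x.
  move=> x hx; apply: le_trans (Pimp_ge x).
  have e0 := expR_gt0 (1 : R).
  have eb : (dist_opt x)%:R * ((n%:R : R)^-1 * (expR 1)^-1) <=
     (dist_opt x)%:R * ((n%:R : R)^-1 * (1 - (n%:R : R)^-1) ^+ n.-1).
    apply: ler_wpM2l; first exact: ler0n.
    apply: ler_wpM2l; first exact: invn_ge0.
    exact: exp_bound.
  apply: le_trans eb.
  have -> : 1 - q = Dthr R n (k n) * (n%:R^-1 * (expR 1)^-1).
    rewrite Dform /q /L; field; by rewrite !gt_eqF.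
  apply: ler_wpM2r; first by rewrite mulr_ge0 ?invr_ge0 ?ler0n ?ltW.
  exact: ltW.
have hE := @ESinit_bound R n (Dthr R n (k n)) (k n) q D0 q0 himp T.
have n0 : (0 < n)%N := ltnW n1.
apply: le_trans (hE n0) _.
have qk : q ^+ (k n) <= expR (- (2 * L / (k n)%:R)) ^+ (k n).
  apply: lerXn2r; rewrite ?nnegrE ?expR_ge0 //.
  by have := expR_ge1Dx (- (2 * L / (k n)%:R)); rewrite /q.
apply: (le_trans (ler_wpM2l (ltW nR) qk)).
rewrite -expRM_natr mulNr divfK ?gt_eqF // expRN expRM_natl /L lnK ?posrE //.
apply: eqle; field; by rewrite gt_eqF.
Qed.
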